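(* Let $\bm{N}=(N_0,\ldots,N_{n-1},-\sum_iN_i)$ and $\bm{M}=(M_0,\ldots,M_{n-1},-\sum_iM_i)$ with all $N_i,M_i\in\mathbb{Z}_{\ge0}$ and $N_i\ge M_i$ for every $i$. Then $K_n(\bm{N})\ge K_n(\bm{M})$.
   Context: $K_n(\bm{N})$ is the number of integer vectors $(f_{ij})_{0\le i<j\le n}\in\mathbb{Z}_{\ge0}^{\binom{n+1}{2}}$ with $\sum_{j>i} f_{ij}-\sum_{k<i} f_{ki}=N_i$ for every $i\in\{0,\ldots,n\}$. *)

(* Defs.v *)
From mathcomp Require Import all_boot all_order all_algebra.
Set Implicit Arguments. Unset Strict Implicit. Unset Printing Implicit Defensive.
Import Order.TTheory GRing.Theory Num.Theory.

Local Open Scope ring_scope.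

(* Bound on the entries of any solution: every f_ij <= sum_{k<=i} N_k
   <= sum_k |N_k|, so entries range in 'I_(kbound N).+1 without loss. *)
Definition kbound (n : nat) (N : 'I_n.+1 -> int) : nat :=
  (\sum_(k < n.+1) `|N k|)%N.

Definition is_flow (n : nat) (N : 'I_n.+1 -> int)
    (f : {ffun 'I_n.+1 * 'I_n.+1 -> 'I_(kbound N).+1}) : bool :=
  [forall i : 'I_n.+1, forall j : 'I_n.+1, (j <= i)%N ==> (nat_of_ord (f (i, j)) == 0%N)] &&
  [forall i : 'I_n.+1, (\sum_(j < n.+1 | (i < j)%N) (nat_of_ord (f (i, j)))%:Z)
             - (\sum_(k < n.+1 | (k < i)%N) (nat_of_ord (f (k, i)))%:Z) == N i].

Definition K (n : nat) (N : 'I_n.+1 -> int) : nat := #|[pred f | @is_flow n N f]|.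

Definition extvec (n : nat) (N : 'I_n -> nat) : 'I_n.+1 -> int :=
  fun i => match unlift ord_max i with
           | Some i' => (N i')%:Z
           | None => - (\sum_(k < n) (N k)%:Z)
           end.

(* Main.v *)
Require Import Defs.
From mathcomp Require Import all_boot all_order all_algebra.
From mathcomp Require Import zify.
Import Order.TTheory GRing.Theory Num.Theory.
Set Implicit Arguments. Unset Strict Implicit.

Definition ee (n : nat) (N M : 'I_n -> nat) (i : 'I_n.+1) : nat :=
  match unlift ord_max i with Some i' => (N i' - M i')%N | None => 0%N end.

Definition dd (n : nat) (N M : 'I_n -> nat) (p : 'I_n.+1 * 'I_n.+1) : nat :=
  if p.2 == ord_max then ee N M p.1 else 0%N.

Definition phi (n : nat) (N M : 'I_n -> nat)
  (f : {ffun 'I_n.+1 * 'I_n.+1 -> 'I_(kbound (extvec M)).+1}) :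
  {ffun 'I_n.+1 * 'I_n.+1 -> 'I_(kbound (extvec N)).+1} :=
  [ffun p => inord (f p + dd N M p)].
Arguments phi {n} N M f.

Lemma extvec_lift n (X : 'I_n -> nat) (i : 'I_n) : extvec X (lift ord_max i) = (Posz (X i)).
Proof. by rewrite /extvec liftK. Qed.

Lemma extvec_max n (X : 'I_n -> nat) : extvec X ord_max = (- (\sum_(k < n) (Posz (X k))))%R.
Proof. by rewrite /extvec unlift_none. Qed.

Lemma sumZ n (X : 'I_n -> nat) : (\sum_(k < n) (Posz (X k)))%R = Posz (\sum_(k < n) X k)%N.
Proof. by rewrite -[RHS]natz natr_sum; apply: eq_bigr => i _; rewrite natz. Qed.

Lemma widen_lift n (i : 'I_n) : widen_ord (leqnSn n) i = lift ord_max i.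
Proof. by apply: ord_inj; rewrite lift_max. Qed.

Lemma kboundE n (X : 'I_n -> nat) : kbound (extvec X) = (\sum_(k < n) X k).*2.
Proof.
rewrite /kbound big_ord_recr /= extvec_max abszN sumZ /= -addnn; congr (_ + _).
by apply: eq_bigr => i _; rewrite widen_lift extvec_lift.
Qed.

Lemma lift_lt n (j : 'I_n) : (nat_of_ord (lift ord_max j) < n)%N.
Proof. by rewrite lift_max ltn_ord. Qed.

Lemma ee_max n (N M : 'I_n -> nat) : ee N M ord_max = 0%N.
Proof. by rewrite /ee unlift_none. Qed.

Lemma ee_lift n (N M : 'I_n -> nat) i : ee N M (lift ord_max i) = (N i - M i)%N.
Proof. by rewrite /ee liftK. Qed.

Lemma dd_bound n (N M : 'I_n -> nat) (hle : forall i, M i <= N i) p :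
  dd N M p <= \sum_(k < n) N k - \sum_(k < n) M k.
Proof.
rewrite /dd; case: (_ == _) => //; case: (unliftP ord_max p.1) => [j ->|->].
  rewrite ee_lift -sumnB; last by move=> i _; apply: hle.
  by rewrite (bigD1 j) //= leq_addr.
by rewrite ee_max.
Qed.

Lemma phi_bound n (N M : 'I_n -> nat) (hle : forall i, M i <= N i)
  (f : {ffun 'I_n.+1 * 'I_n.+1 -> 'I_(kbound (extvec M)).+1}) p :
  f p + dd N M p < (kbound (extvec N)).+1.
Proof.
rewrite ltnS; have hf : (f p <= (\sum_(k < n) M k).*2)%N by rewrite -kboundE -ltnS ltn_ord.
move: (nat_of_ord (f p)) hf => x hf.
have := dd_bound hle p; rewrite (kboundE N).
have : \sum_(k < n) M k <= \sum_(k < n) N k by apply: leq_sum => i _; apply: hle.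
lia.
Qed.

Lemma phiE n (N M : 'I_n -> nat) (hle : forall i, M i <= N i) f p :
  nat_of_ord (phi N M f p) = f p + dd N M p.
Proof. by rewrite /phi ffunE inordK // phi_bound. Qed.

Theorem corollary2p9 (n : nat) (N M : 'I_n -> nat) :
  (forall i : 'I_n, (M i <= N i)%N) ->
  (K (extvec M) <= K (extvec N))%N.
Proof.
move=> hle.
have inj : {in [pred f | @is_flow n (extvec M) f] &, injective (phi N M)}.
  move=> f g _ _ H; apply/ffunP => p; apply: val_inj.
  have := congr1 (fun h : {ffun 'I_n.+1 * 'I_n.+1 -> 'I_(kbound (extvec N)).+1} => nat_of_ord (h p)) H; rewrite /= !phiE //.
  by move/eqP; rewrite eqn_add2r => /eqP.
rewrite /K -(card_in_imset inj); apply: subset_leq_card.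
apply/subsetP => _ /imsetP [f hf ->]; rewrite inE.
move: hf; rewrite inE => /andP [/forallP h1 /forallP h2].
apply/andP; split.
  apply/forallP => i; apply/forallP => j; apply/implyP => hji.
  rewrite phiE //.
  have := h1 i => /forallP /(_ j) /implyP /(_ hji) /eqP ->.
  rewrite /dd /=; case: ifP => // /eqP hj.
  have -> : i = ord_max by apply: ord_inj; apply/eqP; rewrite eqn_leq leq_ord /=; move: hji; rewrite hj.
  by rewrite ee_max.
apply/forallP => i; have := h2 i => /eqP hM.
rewrite (eq_bigr (fun j => Posz (f (i,j)) + Posz (dd N M (i,j))))%R; last first.
  by move=> j _; rewrite (phiE hle f (i, j)).
rewrite [X in (_ - X)%R](eq_bigr (fun k => Posz (f (k,i)) + Posz (dd N M (k,i))))%R; last first.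
  by move=> k _; rewrite (phiE hle f (k, i)).
rewrite !big_split /=.
have hA : (\sum_(j < n.+1 | (i < j)%N) Posz (dd N M (i, j)))%R = Posz (ee N M i).
  case: (unliftP ord_max i) => [j0 ->|->].
    rewrite (bigD1 ord_max) /=; last exact: lift_lt.
    rewrite {1}/dd /= eqxx big1 ?addr0 // => j /andP [_ /negbTE hj].
    by rewrite /dd /= hj.
  rewrite big1 ?ee_max // => j _; by rewrite /dd /= ee_max; case: ifP.
have hB : (\sum_(k < n.+1 | (k < i)%N) Posz (dd N M (k, i)))%R =
   if i == ord_max then Posz (\sum_(k < n) N k - \sum_(k < n) M k)%N else 0%R.
  case: eqP => [->|/eqP hi]; last by rewrite big1 // => k _; rewrite /dd /= (negbTE hi).
  rewrite big_mkcond big_ord_recr /= ltnn addr0 -sumnB; last by move=> k _; apply: hle.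
  rewrite -sumZ; apply: eq_bigr => k _.
  by rewrite /= ltn_ord /dd /= eqxx widen_lift ee_lift.
rewrite hA hB; move: hM.
set F1 := (\sum_(j < n.+1 | _) Posz (nat_of_ord (f _)))%R.
set F2 := (\sum_(k < n.+1 | _) Posz (nat_of_ord (f _)))%R.
have hS : (\sum_(k < n) M k <= \sum_(k < n) N k)%N by apply: leq_sum => k _; apply: hle.
case: (unliftP ord_max i) => [j ->|->].
  have -> : (lift ord_max j == ord_max) = false by apply/negbTE/eqP => E; move: (lift_lt j); rewrite E ltnn.
  rewrite !extvec_lift ee_lift.
  have := hle j; move=> ? ?; apply/eqP; lia.
rewrite eqxx !extvec_max ee_max !sumZ.
move=> ?; apply/eqP; lia.
Qed.
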